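(* Let $(\theta^k)_k$ be a sequence of Borel probability measures on $\mathbb{R}_+$, absolutely continuous with respect to Lebesgue measure, with densities $f_{\theta^k}=\sum_{m=1}^\infty \xi^k_m \mathbf{1}_{[m-1,m)}$ where $\xi^k=(\xi^k_1,\xi^k_2,\dots)$ is a probability distribution on the positive integers. Then $(\theta^k)_k$ satisfies the long-term condition (LTC) if and only if $\sum_{m=1}^\infty|\xi^k_{m+1}-\xi^k_m|\to0$ as $k\to\infty$.
   Context: For a Borel probability measure $\theta$ on $\mathbb{R}_+$ and $s\geq0$, $TV_s(\theta)=\sup_{Q\in\mathcal{B}(\mathbb{R}_+)}|\theta(Q)-\theta(Q+s)|$. A sequence $(\theta^k)_{k\ge1}$ satisfies the LTC if for every $S>0$, $\sup_{0\leq s\leq S}TV_s(\theta^k)\to0$ as $k\to\infty$. *)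

(* Defs.v *)
From HB Require Import structures.
From mathcomp Require Import all_boot all_order all_algebra.
From mathcomp Require Import all_classical all_reals all_analysis.
Set Implicit Arguments. Unset Strict Implicit. Unset Printing Implicit Defensive.
Import Order.TTheory GRing.Theory Num.Theory.
Import numFieldNormedType.Exports.
Local Open Scope classical_set_scope.
Local Open Scope ring_scope.
Local Open Scope ereal_scope.

Definition Rplus (R : realType) : set R := `[0%R, +oo[%classic.

Definition shift_set (R : realType) (Q : set R) (s : R) : set R :=
  [set (x + s)%R | x in Q].

Definition TV (R : realType) (theta : {measure set R -> \bar R}) (s : R) : \bar R :=
  ereal_sup [set `|theta Q - theta (shift_set Q s)| |
             Q in [set Q : set R | measurable Q /\ Q `<=` @Rplus R]].

Definition LTC (R : realType) (theta : nat -> {measure set R -> \bar R}) : Prop :=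
  forall S : R, (0 < S)%R ->
    (fun k => ereal_sup [set TV (theta k) s | s in `[0%R, S]%classic])
      @ \oo --> 0.

Definition step_density (R : realType) (xi : nat -> R) (x : R) : \bar R :=
  \sum_(1 <= m <oo) ((xi m)%:E * (\1_(`[(m%:R - 1)%R, m%:R[%classic) x)%:E).

(* Main.v *)
Require Import Defs.
From HB Require Import structures.
From mathcomp Require Import all_boot all_order all_algebra.
From mathcomp Require Import all_classical all_reals all_analysis.
From mathcomp Require Import measurable_realfun.
From mathcomp Require Import ring lra.
Import Order.TTheory GRing.Theory Num.Theory.
Import numFieldNormedType.Exports.
Set Implicit Arguments. Unset Strict Implicit. Unset Printing Implicit Defensive.
Local Open Scope classical_set_scope.
Local Open Scope ring_scope.
Local Open Scope ereal_scope.
Section Aux.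
Variable R : realType.
Local Notation mu := (@lebesgue_measure R).

Definition I (n : nat) : set R := `[n%:R, n.+1%:R[%classic.
Definition stepf (c : nat -> R) (x : R) : \bar R :=
  \sum_(n <oo) ((c n)%:E * (\1_(I n) x)%:E).
Definition gg (c : nat -> R) (x : R) : \bar R :=
  if (0 <= x)%R then (c (Num.truncn x))%:E else 0.

Lemma I_trunc n x : I n x <-> (0 <= x)%R /\ Num.truncn x = n.
Proof.
rewrite /I /= in_itv /=; split.
  move=> /andP[h1 h2]; split; first exact: le_trans h1.
  by apply: truncn_def; rewrite h1 h2.
move=> [x0 <-]; exact: truncn_itv.
Qed.

Lemma stepfE c : (forall n, 0 <= c n)%R -> forall x, stepf c x = gg c x.
Proof.
move=> c0 x; rewrite /stepf /gg; case: ifPn => x0.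
  rewrite (@nneseriesD1 _ _ (Num.truncn x) xpredT); last 2 first.
  - by move=> k _; rewrite mule_ge0// lee_fin// indicE.
  - by [].
  rewrite indicE mem_set; last by apply/I_trunc.
  rewrite mule1 eseries0 ?adde0// => i _ /= ni.
  rewrite indicE memNset ?mulr0 ?mule0//.
  by move/I_trunc => [_ ti]; move: ni; rewrite ti eqxx.
rewrite eseries0// => i _ _; rewrite indicE memNset ?mulr0 ?mule0//.
by move/I_trunc => [+ _]; rewrite (negbTE x0).
Qed.

Lemma measurable_I n : measurable (I n).
Proof. exact: measurable_itv. Qed.

Lemma stepf_measurable (c : nat -> R) : (forall n, 0 <= c n)%R ->
  measurable_fun [set: R] (stepf c).
Proof.
move=> c0; apply: (@ge0_emeasurable_sum _ _ _ _ _ xpredT).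
  by move=> k x _ _; rewrite mule_ge0// lee_fin// indicE.
move=> k _; under eq_fun do rewrite -EFinM.
apply/measurable_EFinP; apply: measurable_funM => //.
by apply: measurable_indic; exact: measurable_I.
Qed.

Lemma stepf_ge0 c : (forall n, 0 <= c n)%R -> forall x, 0 <= stepf c x.
Proof.
move=> c0 x; rewrite stepfE// /gg; case: ifP => // _; exact: c0.
Qed.

Lemma stepf_integral (c : nat -> R) D : (forall n, 0 <= c n)%R -> measurable D ->
  \int[mu]_(x in D) stepf c x = \sum_(n <oo) ((c n)%:E * mu (I n `&` D)).
Proof.
move=> c0 mD; rewrite integral_nneseries//; last 2 first.
- move=> n; under eq_fun do rewrite -EFinM.
  apply/measurable_EFinP; apply: measurable_funM => //.
  by apply: measurable_indic; exact: measurable_I.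
- by move=> n x _; rewrite mule_ge0// lee_fin// indicE.
apply: eq_eseriesr => n _; rewrite ge0_integralZl_EFin//; last first.
  apply/measurable_EFinP; by apply: measurable_indic; exact: measurable_I.
by rewrite integral_indic//; exact: measurable_I.
Qed.

Lemma mu_I n : mu (I n) = 1.
Proof.
rewrite /I lebesgue_measure_itv/= lte_fin ltr_nat ltnSn -EFinD.
by rewrite -natrB// subSnn.
Qed.

Lemma stepf_integral_Rplus (c : nat -> R) (D : set R) : (forall n, 0 <= c n)%R -> measurable D ->
  @Rplus R `<=` D ->
  \int[mu]_(x in D) stepf c x = \sum_(n <oo) (c n)%:E.
Proof.
move=> c0 mD RD; rewrite stepf_integral//; apply: eq_eseriesr => n _.
rewrite setIidl ?mu_I ?mule1// => x /I_trunc[x0 _]; apply: RD.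
by rewrite /Rplus /= in_itv /= x0.
Qed.

Lemma shift_setE (A : set R) s : shift_set A s = (fun x => x - s)%R @^-1` A.
Proof.
apply/seteqP; split => x /=.
  by move=> [y Ay <-]; rewrite addrK.
by move=> Ax; exists (x - s)%R => //; rewrite subrK.
Qed.

Lemma measurable_shift_fun s : measurable_fun [set: R] (fun x => x - s)%R.
Proof. by apply: measurable_funD. Qed.

Lemma measurable_shift (A : set R) s : measurable A -> measurable (shift_set A s).
Proof.
move=> mA; rewrite shift_setE -[X in measurable X]setTI.
exact: measurable_shift_fun.
Qed.

Lemma mu_shift (A : set R) s : measurable A -> mu (shift_set A s) = mu A.
Proof.
move=> mA; rewrite shift_setE.
pose f := (fun x : measurableTypeR R => (x - s)%R : measurableTypeR R).
have mf : measurable_fun [set: measurableTypeR R] f by exact: measurable_shift_fun.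
suff h : forall X, ocitv X -> mu X = pushforward mu f X.
  by rewrite (@lebesgue_measure_unique R (pushforward mu f) h A mA).
move=> X [[a b] _ <-]; rewrite /pushforward /=.
have -> : (fun x => x - s)%R @^-1` `]a, b]%classic = `](a + s)%R, (b + s)%R]%classic.
  by apply/seteqP; split => x /=; rewrite !in_itv /= ltrBrDr lerBlDr.
rewrite !lebesgue_measure_itv /= !lte_fin ltrD2r.
by case: ifP => // _; rewrite -!EFinD; congr EFin; ring.
Qed.

Lemma integral_shift (A : set R) s (G : R -> \bar R) : measurable A ->
  measurable_fun [set: R] G -> (forall x, 0 <= G x) ->
  \int[mu]_(x in shift_set A s) G x = \int[mu]_(x in A) G (x + s)%R.
Proof.
move=> mA mG G0.
pose h := fun x : measurableTypeR R => (x + s)%R : measurableTypeR R.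
have mh : measurable_fun [set: measurableTypeR R] h by apply: measurable_funD.
transitivity (\int[pushforward mu h]_(x in shift_set A s) G x).
  apply: eq_measure_integral => B mB _ /=; rewrite /pushforward /=.
  have -> : h @^-1` B = shift_set B (- s)%R.
    by rewrite shift_setE opprK.
  by rewrite mu_shift.
rewrite (@ge0_integral_pushforward _ _ _ _ R h mh mu (shift_set A s) G); last 3 first.
- exact: measurable_shift.
- exact: measurable_funTS.
- by move=> y _; exact: G0.
congr (integral _ _ _).
by rewrite shift_setE; apply/seteqP; split => x /=; rewrite /h addrK.
Qed.

Lemma eseries_shift1 (u : nat -> \bar R) : (forall m, (1 <= m)%N -> 0 <= u m) ->
  \sum_(1 <= m <oo) u m = \sum_(n <oo) u n.+1.
Proof.
move=> u0; pose v m := if m == 0%N then 0 else u m.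
have -> : \sum_(1 <= m <oo) u m = \sum_(1 <= m <oo) v m.
  apply: congr_lim; apply/funext => n; apply: eq_big_nat => m /andP[m1 _].
  by rewrite /v; case: eqP => // m0; rewrite m0 in m1.
rewrite -nneseries_addn; last first.
  by move=> i; rewrite /v; case: eqP => // /eqP i0; apply: u0; rewrite lt0n.
by apply: eq_eseriesr => i _; rewrite /v addn1.
Qed.

Lemma tele (c : nat -> R) t e :
  (`|c t - c (t + e)%N| <= \sum_(0 <= j < e) `|c (t + j).+1 - c (t + j)%N|)%R.
Proof.
elim: e => [|e IH]; first by rewrite addn0 subrr normr0 big_geq.
rewrite big_nat_recr//= (le_trans (ler_distD (c (t + e)%N) _ _))//.
by rewrite lerD// addnS distrC.
Qed.

Lemma tele2 (c : nat -> R) t e N : (e <= N)%N ->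
  (`|c t - c (t + e)%N| <= \sum_(0 <= j < N) `|c (t + j).+1 - c (t + j)%N|)%R.
Proof.
move=> eN; apply: le_trans (tele c t e) _.
rewrite (big_cat_nat (leq0n e) eN) /= lerDl.
by apply: sumr_ge0 => i _.
Qed.

Lemma abs_sub_le (a b M : \bar R) : a \is a fin_num -> b \is a fin_num ->
  a <= b + M -> b <= a + M -> `|a - b| <= M.
Proof.
move: a b M => [a| |] [b| |] [M| |] //= _ _; rewrite ?leey//.
rewrite -!EFinD !lee_fin => h1 h2; rewrite ler_norml; apply/andP; split; lra.
Qed.

End Aux.

Section Main.
Variables (R : realType) (xi : nat -> nat -> R)
  (theta : nat -> {measure set R -> \bar R}).
Hypothesis xi_ge0 : forall k m, (1 <= m)%N -> (0 <= xi k m)%R.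
Hypothesis xi_sum1 : forall k, \sum_(1 <= m <oo) (xi k m)%:E = 1.
Hypothesis theta_density : forall k (A : set R), measurable A ->
     theta k A = \int[@lebesgue_measure R]_(x in A) step_density (xi k) x.
Local Notation mu := (@lebesgue_measure R).

Let c k n := xi k n.+1.
Let c0 k n : (0 <= c k n)%R. Proof. exact: xi_ge0. Qed.

Lemma L_step k x : step_density (xi k) x = stepf (c k) x.
Proof.
rewrite /step_density eseries_shift1; last first.
  by move=> m m1; rewrite mule_ge0// lee_fin ?xi_ge0// indicE.
apply: eq_eseriesr => n _; rewrite /c /I -natr1 addrK.
by [].
Qed.

Lemma L_thetaE k A : measurable A ->
  theta k A = \int[mu]_(x in A) stepf (c k) x.
Proof.
by move=> mA; rewrite theta_density//; apply: eq_integral => x _; rewrite L_step.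
Qed.

Lemma L_thetaT k : theta k setT = 1.
Proof.
rewrite L_thetaE// stepf_integral_Rplus//.
by rewrite -(xi_sum1 k) eseries_shift1// => m m1; rewrite lee_fin xi_ge0.
Qed.

Lemma L_fin k A : measurable A -> theta k A \is a fin_num.
Proof.
move=> mA; rewrite ge0_fin_numE//.
have h : theta k A <= theta k setT by apply: le_measure; rewrite ?inE.
by rewrite (le_lt_trans h)// L_thetaT ltry.
Qed.

Lemma L_thetaS k Q s : measurable Q ->
  theta k (shift_set Q s) = \int[mu]_(x in Q) stepf (c k) (x + s)%R.
Proof.
move=> mQ; rewrite L_thetaE; last exact: measurable_shift.
rewrite integral_shift//; [exact: stepf_measurable | exact: stepf_ge0].
Qed.

Let d k n : R := `|c k n.+1 - c k n|%R.
Let d0 k n : (0 <= d k n)%R. Proof. exact: normr_ge0. Qed.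
Let D' k : \bar R := \sum_(n <oo) (d k n)%:E.

Lemma L_D k : \sum_(1 <= m <oo) `|(xi k m.+1 - xi k m)%R|%:E = D' k.
Proof. by rewrite eseries_shift1// => m _; rewrite lee_fin. Qed.

Lemma L_tail k j : \sum_(n <oo) (d k (n + j)%N)%:E <= D' k.
Proof.
rewrite (@nneseries_addn _ (fun n => (d k n)%:E)); last by move=> i; rewrite lee_fin.
rewrite /D' (@nneseries_split _ _ 0 j); last by move=> i _; rewrite lee_fin.
rewrite add0n leeDr//; apply: sume_ge0 => i _; by rewrite lee_fin d0.
Qed.

Lemma L_pt k (s : R) N (x : R) : (0 <= x)%R -> (0 <= s)%R -> (s < N%:R)%R ->
  stepf (c k) x <= stepf (c k) (x + s) + \sum_(j < N) stepf (fun n => d k (n + j)%N) x /\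
  stepf (c k) (x + s) <= stepf (c k) x + \sum_(j < N) stepf (fun n => d k (n + j)%N) x.
Proof.
move=> x0 s0 sN.
have xs0 : (0 <= x + s)%R by rewrite addr_ge0.
rewrite !stepfE//; under eq_bigr do rewrite stepfE//.
rewrite /gg x0 xs0 sumEFin -!EFinD !lee_fin.
set t := Num.truncn x; set u := Num.truncn (x + s).
have tu : (t <= u)%N by apply: le_truncn; rewrite lerDl.
have uN : (u <= t + N)%N.
  rewrite /u truncn_le_nat -addSn natrD.
  by apply: ltrD => //; exact: truncnS_gt.
have := @tele2 R (c k) t (u - t)%N N.
rewrite leq_subLR subnKC// => /(_ uN).
rewrite big_mkord => h.
have h1 := ler_norm (c k t - c k u); have h2 := ler_norm (c k u - c k t).
rewrite distrC in h2.
split; lra.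
Qed.


Lemma measurable_Rplus : measurable (@Rplus R).
Proof. exact: measurable_itv. Qed.

Lemma mshift_stepf k (s : R) : measurable_fun [set: R] (fun x => stepf (c k) (x + s)%R).
Proof.
change (measurable_fun [set: R] (stepf (c k) \o (fun x => x + s)%R)).
apply: measurableT_comp; first exact: stepf_measurable.
by apply: measurable_funD.
Qed.

Lemma L_upper k (S s : R) : (0 <= s)%R -> (s <= S)%R ->
  TV (theta k) s <= D' k *+ (Num.truncn S).+1.
Proof.
move=> s0 sS; set N := (Num.truncn S).+1.
have sN : (s < N%:R)%R by apply: le_lt_trans sS (truncnS_gt S).
pose H x := \sum_(j < N) stepf (fun n => d k (n + j)%N) x.
have mH : measurable_fun [set: R] H.
  by apply: emeasurable_sum => j; exact: stepf_measurable.
have H0 x : 0 <= H x by apply: sume_ge0 => j _; exact: stepf_ge0.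
have intH : \int[mu]_(x in @Rplus R) H x <= D' k *+ N.
  rewrite /H ge0_integral_sum//; last 3 first.
  - exact: measurable_Rplus.
  - by move=> j; apply: measurable_funTS; exact: stepf_measurable.
  - by move=> j x _; exact: stepf_ge0.
  have -> : D' k *+ N = \sum_(j < N) D' k by rewrite sumr_const card_ord.
  apply: lee_sum => j _.
  rewrite stepf_integral_Rplus//; last exact: measurable_Rplus.
  exact: L_tail.
have intHQ (Q : set R) : measurable Q -> Q `<=` @Rplus R ->
    \int[mu]_(x in Q) H x <= D' k *+ N.
  move=> mQ QR; apply: le_trans intH; apply: ge0_subset_integral => //.
    exact: measurable_Rplus.
  exact: measurable_funTS.
apply: ge_ereal_sup => _ [Q [mQ QR] <-].
have mst : measurable_fun Q (stepf (c k)).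
  by apply: measurable_funTS; exact: stepf_measurable.
have msts : measurable_fun Q (fun x => stepf (c k) (x + s)%R).
  by apply: measurable_funTS; exact: mshift_stepf.
have mHQ : measurable_fun Q H by exact: measurable_funTS.
have Q0 x : Q x -> (0 <= x)%R.
  by move=> /QR; rewrite /Rplus /= in_itv /= andbT.
apply: abs_sub_le.
- exact: L_fin.
- by apply: L_fin; exact: measurable_shift.
- rewrite L_thetaS// L_thetaE//.
  apply: (@le_trans _ _ (\int[mu]_(x in Q) (stepf (c k) (x + s)%R + H x))).
    apply: ge0_le_integral => //.
    + by move=> x _; exact: stepf_ge0.
    + by apply: emeasurable_funD.
    + by move=> x /Q0 x0; have [+ _] := L_pt k x0 s0 sN.
  rewrite ge0_integralD//; last by move=> x _; exact: stepf_ge0.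
  by apply: leeD2l; exact: intHQ.
- rewrite L_thetaS// L_thetaE//.
  apply: (@le_trans _ _ (\int[mu]_(x in Q) (stepf (c k) x + H x))).
    apply: ge0_le_integral => //.
    + by move=> x _; exact: stepf_ge0.
    + by apply: emeasurable_funD.
    + by move=> x /Q0 x0; have [_ +] := L_pt k x0 s0 sN.
  rewrite ge0_integralD//; last by move=> x _; exact: stepf_ge0.
  by apply: leeD2l; exact: intHQ.
Qed.


Lemma abs_sub_add (a b : \bar R) : a \is a fin_num -> 0 <= b -> `|a - (a + b)| = b.
Proof.
move: a b => [a| |] [b| |] //= _; rewrite ?lee_fin => b0.
by rewrite opprD addrA subrr sub0r normrN ger0_norm.
Qed.

Lemma abs_add_sub (a b : \bar R) : a \is a fin_num -> 0 <= b -> `|a + b - a| = b.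
Proof. by move=> af b0; rewrite (addeC a b) addeK// gee0_abs. Qed.

Lemma trunc1 (x : R) : (0 <= x)%R -> Num.truncn (x + 1)%R = (Num.truncn x).+1.
Proof.
move=> x0; apply: truncn_def; have /andP[h1 h2] := truncn_itv x0.
rewrite -!natr1; apply/andP; split; lra.
Qed.

Lemma L_lower k : D' k <= TV (theta k) 1 + TV (theta k) 1.
Proof.
pose P n := (c k n.+1 <= c k n)%R.
pose Q : set R := \bigcup_(n in [set n | P n]) @I R n.
pose Q' : set R := \bigcup_(n in [set n | ~~ P n]) @I R n.
have QE (x : R) : Q x <-> (0 <= x)%R /\ P (Num.truncn x).
  split; first by move=> [n Pn /I_trunc[x0 tn]]; rewrite tn.
  by move=> [x0 Pt]; exists (Num.truncn x) => //; apply/I_trunc.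
have Q'E (x : R) : Q' x <-> (0 <= x)%R /\ ~~ P (Num.truncn x).
  split; first by move=> [n Pn /I_trunc[x0 tn]]; rewrite tn.
  by move=> [x0 Pt]; exists (Num.truncn x) => //; apply/I_trunc.
have mQ : measurable Q by apply: bigcup_measurable => n _; exact: measurable_I.
have mQ' : measurable Q' by apply: bigcup_measurable => n _; exact: measurable_I.
have QR : Q `<=` @Rplus R.
  by move=> x /QE[x0 _]; rewrite /Rplus /= in_itv /= x0.
have Q'R : Q' `<=` @Rplus R.
  by move=> x /Q'E[x0 _]; rewrite /Rplus /= in_itv /= x0.
pose K := stepf (d k).
have mK : measurable_fun [set: R] K by exact: stepf_measurable.
have K0 x : 0 <= K x by exact: stepf_ge0.
have ptQ x : Q x -> stepf (c k) x = stepf (c k) (x + 1)%R + K x.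
  move=> /QE[x0 Pt]; have x10 : (0 <= x + 1)%R by rewrite addr_ge0.
  rewrite /K !stepfE// /gg x0 x10 trunc1// -EFinD; congr EFin.
  rewrite /d ler0_norm ?subr_le0//; lra.
have ptQ' x : Q' x -> stepf (c k) (x + 1)%R = stepf (c k) x + K x.
  move=> /Q'E[x0 Pt]; have x10 : (0 <= x + 1)%R by rewrite addr_ge0.
  rewrite /K !stepfE// /gg x0 x10 trunc1// -EFinD; congr EFin.
  rewrite /P -ltNge in Pt.
  rewrite /d ger0_norm ?subr_ge0 ?(ltW Pt)//; lra.
have A_eq : theta k Q = theta k (shift_set Q 1) + \int[mu]_(x in Q) K x.
  rewrite L_thetaS// L_thetaE// -ge0_integralD//; last 3 first.
  - by move=> x _; exact: stepf_ge0.
  - by apply: measurable_funTS; exact: mshift_stepf.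
  - exact: measurable_funTS.
  by apply: eq_integral => x; rewrite inE => Qx; exact: ptQ.
have B_eq : theta k (shift_set Q' 1) = theta k Q' + \int[mu]_(x in Q') K x.
  rewrite L_thetaS// L_thetaE// -ge0_integralD//; last 3 first.
  - by move=> x _; exact: stepf_ge0.
  - by apply: measurable_funTS; exact: stepf_measurable.
  - exact: measurable_funTS.
  by apply: eq_integral => x; rewrite inE => Qx; exact: ptQ'.
have TVA : \int[mu]_(x in Q) K x <= TV (theta k) 1.
  apply: ereal_sup_ubound; exists Q; first by split.
  rewrite A_eq abs_add_sub//; last exact: integral_ge0.
  by apply: L_fin; exact: measurable_shift.
have TVB : \int[mu]_(x in Q') K x <= TV (theta k) 1.
  apply: ereal_sup_ubound; exists Q'; first by split.
  rewrite B_eq abs_sub_add//; last exact: integral_ge0.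
  exact: L_fin.
have QQ' : Q `|` Q' = @Rplus R.
  apply/seteqP; split => x.
    by case => [/QR|/Q'R].
  rewrite /Rplus /= in_itv /= andbT => x0.
  by case Pt: (P (Num.truncn x)); [left; apply/QE | right; apply/Q'E; rewrite Pt].
have dQ : [disjoint Q & Q'].
  apply/disj_setPS => x [/QE[_ h1] /Q'E[_ h2]].
  by rewrite h1 in h2.
rewrite /D' -(@stepf_integral_Rplus _ (d k) (@Rplus R))//; last exact: measurable_Rplus.
rewrite -QQ' ge0_integral_setU//; last by apply: measurable_funTS.
exact: leeD.
Qed.

End Main.

Unset Implicit Arguments.
Set Strict Implicit.

Theorem mainTheorem4 (R : realType) (xi : nat -> nat -> R)
  (theta : nat -> {measure set R -> \bar R})
  (xi_ge0 : forall k m, (1 <= m)%N -> (0 <= xi k m)%R)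
  (xi_sum1 : forall k, \sum_(1 <= m <oo) (xi k m)%:E = 1)
  (theta_density : forall k (A : set R), measurable A ->
     theta k A = \int[@lebesgue_measure R]_(x in A) step_density (xi k) x) :
  LTC theta <->
  (fun k => \sum_(1 <= m <oo) `|(xi k m.+1 - xi k m)%R|%:E) @ \oo --> 0.
Proof.
pose D' k : \bar R := \sum_(n <oo) (`|xi k n.+2 - xi k n.+1|%R)%:E.
have DE : (fun k => \sum_(1 <= m <oo) `|(xi k m.+1 - xi k m)%R|%:E) = D'.
  by apply/funext => k; rewrite L_D.
have D0 k : 0 <= D' k by apply: nneseries_ge0 => n _ _; rewrite lee_fin.
rewrite DE; split.
- move=> H; have := H 1%R ltr01.
  set sup := (fun k => ereal_sup _) => hs.
  apply: (@squeeze_cvge _ _ _ _ (fun=> 0) _ (fun k => sup k + sup k)).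
  + apply: nearW => k; rewrite D0 /=.
    have h : TV (theta k) 1 <= sup k.
      apply: ereal_sup_ubound; exists 1%R => //=.
      by rewrite in_itv /= ler01 lexx.
    exact: le_trans (L_lower xi_ge0 xi_sum1 theta_density k) (leeD h h).
  + exact: cvg_cst.
  + by rewrite -(adde0 0); apply: cvgeD.
- move=> HD S S0; set N := (Num.truncn S).+1.
  apply: (@squeeze_cvge _ _ _ _ (fun=> 0) _ (fun k => D' k *+ N)).
  + apply: nearW => k /=; apply/andP; split.
      have h : TV (theta k) 0 <= ereal_sup [set TV (theta k) s | s in `[0%R, S]%classic].
        apply: ereal_sup_ubound; exists 0%R => //=.
        by rewrite in_itv /= lexx ltW.
      apply: le_trans h; apply: le_trans (abse_ge0 (theta k set0 - theta k (shift_set set0 0%R))) _.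
      by apply: ereal_sup_ubound; exists set0 => //; split => //; exact: sub0set.
    apply: ge_ereal_sup => _ [s /= + <-]; rewrite in_itv /= => /andP[s0 sS].
    exact: (L_upper xi_ge0 xi_sum1 theta_density k s0 sS).
  + exact: cvg_cst.
  + under eq_fun do rewrite -mule_natl.
    rewrite -(mule0 (N%:R)%:E); exact: cvgeZl.
Qed.
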